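(* Let $n,m\ge 1$, let $A=(a_1,\ldots,a_m)$ be a real $n\times m$ matrix with $a_i\neq 0$ for all $i$, and let $b=(b_1,\ldots,b_m)^\top\in\mathbb{R}^m$ be such that $K=\{x\in\mathbb{R}^n \mid A^\top x\le b\}$ is nonempty. Let $H_i^c=\{x\in\mathbb{R}^n\mid a_i^\top x>b_i\}$ for $i=1,\ldots,m$. For $\varepsilon>0$ put $b_i(\varepsilon)=b_i+\varepsilon^i$, $H_i(\varepsilon)=\{x\mid a_i^\top x\le b_i(\varepsilon)\}$, $\partial H_i(\varepsilon)=\{x\mid a_i^\top x= b_i(\varepsilon)\}$, $K(\varepsilon)=\bigcap_{i=1}^m H_i(\varepsilon)$, $F_i(\varepsilon)=\partial H_i(\varepsilon)\cap K(\varepsilon)$, and $\mathcal{F}(\varepsilon)=\{J\subseteq\{1,\ldots,m\}\mid J\neq\emptyset,\ \bigcap_{i\in J}F_i(\varepsilon)\neq\emptyset\}$, and let $\mathcal{F}(0+)$ denote the common value of $\mathcal{F}(\varepsilon)$ for all sufficiently small $\varepsilon>0$ (which is known to exist). Then for all $x\in\mathbb{R}^n$, \[ \mathbf{1}_{\bigcup_{i=1}^m H_i^c}(x)=\sum_{J\in\mathcal{F}(0+)}(-1)^{|J|-1}\,\mathbf{1}_{\bigcap_{i\in J}H_i^c}(x), \] where $\mathbf{1}_S$ denotes the indicator function of $S$ and $|J|$ the cardinality of $J$. *)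

(* Defs.v *)
From mathcomp Require Import all_boot all_order all_algebra.
From mathcomp Require Import reals.
Set Implicit Arguments. Unset Strict Implicit. Unset Printing Implicit Defensive.
Import Order.TTheory GRing.Theory Num.Theory.
Local Open Scope ring_scope.

Definition aTx (R : realType) (n m : nat) (A : 'M[R]_(n, m)) (x : 'cV[R]_n)
  (i : 'I_m) : R := (A^T *m x) i 0.

(* b_i(eps) = b_i + eps^(i+1) : the paper indexes 1..m, ordinals index 0..m-1 *)
Definition b_eps (R : realType) (m : nat) (b : 'cV[R]_m) (eps : R) (i : 'I_m) : R :=
  b i 0 + eps ^+ i.+1.

Definition in_K_eps (R : realType) (n m : nat) (A : 'M[R]_(n, m)) (b : 'cV[R]_m)
  (eps : R) (x : 'cV[R]_n) : Prop :=
  forall i : 'I_m, aTx A x i <= b_eps b eps i.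

Definition in_F_eps (R : realType) (n m : nat) (A : 'M[R]_(n, m)) (b : 'cV[R]_m)
  (eps : R) (J : {set 'I_m}) : Prop :=
  J != set0 /\
  exists x : 'cV[R]_n,
    (forall i, i \in J -> aTx A x i = b_eps b eps i) /\ in_K_eps A b eps x.

Definition in_Hc (R : realType) (n m : nat) (A : 'M[R]_(n, m)) (b : 'cV[R]_m)
  (i : 'I_m) (x : 'cV[R]_n) : bool := b i 0 < aTx A x i.

Definition ind_union (R : realType) (n m : nat) (A : 'M[R]_(n, m)) (b : 'cV[R]_m)
  (x : 'cV[R]_n) : R := ([exists i, in_Hc A b i x] : bool)%:R.

Definition ind_inter (R : realType) (n m : nat) (A : 'M[R]_(n, m)) (b : 'cV[R]_m)
  (J : {set 'I_m}) (x : 'cV[R]_n) : R := ([forall i in J, in_Hc A b i x] : bool)%:R.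

(* Main.v *)
Require Import Defs.
From mathcomp Require Import all_boot all_order all_algebra.
From mathcomp Require Import reals boolp.
From mathcomp Require Import zify ring lra.
Set Implicit Arguments. Unset Strict Implicit. Unset Printing Implicit Defensive.
Import Order.TTheory GRing.Theory Num.Theory.
Local Open Scope ring_scope.

Definition neP (R : realType) (n m : nat) (g : 'I_m -> 'cV[R]_n -> R)
  (T J : {set 'I_m}) : Prop :=
  exists y, (forall j, j \in J :|: T -> g j y = 0) /\ (forall i, g i y <= 0).

Definition nb (R : realType) (n m : nat) (g : 'I_m -> 'cV[R]_n -> R)
  (T J : {set 'I_m}) : bool := `[< neP g T J >].

Definition Ssum (R : realType) (n m : nat) (g : 'I_m -> 'cV[R]_n -> R)
  (T W : {set 'I_m}) : R :=
  \sum_(J : {set 'I_m} | J \subset W) (-1) ^+ #|J| * (nb g T J)%:R.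

Lemma Ssum_decomp (R : realType) (n m : nat) (g : 'I_m -> 'cV[R]_n -> R)
  (T W : {set 'I_m}) (k : 'I_m) : k \in W ->
  Ssum g T W = Ssum g T (W :\ k) - Ssum g (k |: T) (W :\ k).
Proof.
move=> kW; rewrite /Ssum (bigID (fun J : {set 'I_m} => k \in J)) /= addrC; congr (_ + _).
  by apply: eq_bigl => J; rewrite subsetD1.
rewrite (reindex_onto (fun L => k |: L) (fun J => J :\ k)) /=; last first.
  by move=> J /andP[_ kJ]; rewrite setD1K.
rewrite -sumrN; apply: eq_big => L.
  rewrite setU11 andbT subsetD1 subUset sub1set kW /=.
  congr (_ && _); case kL: (k \in L); last by rewrite setU1K ?kL ?eqxx.
  apply/negbTE; apply/eqP => E.
  by move: kL; rewrite -E setD11.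
move=> /andP[_ /eqP E]; have kL : k \notin L by rewrite -E setD11.
rewrite cardsU1 kL /= exprS mulN1r mulNr; congr (- (_ * _)).
rewrite /nb /neP; have -> : (k |: L) :|: T = L :|: (k |: T) by rewrite setUCA setUA.
by [].
Qed.

Lemma Ssum_set0 (R : realType) (n m : nat) (g : 'I_m -> 'cV[R]_n -> R) T :
  Ssum g T set0 = (nb g T set0)%:R.
Proof.
rewrite /Ssum (eq_bigl (fun J => J == set0)); last by move=> J; rewrite subset0.
by rewrite big_pred1_eq cards0 expr0 mul1r.
Qed.

Lemma nb_weak (R : realType) (n m : nat) (g : 'I_m -> 'cV[R]_n -> R) T J :
  nb g T J -> nb g T set0.
Proof.
move=> /asboolP [y [Hy1 Hy2]]; apply/asboolP; exists y; split=> // j.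
by rewrite set0U => jT; apply: Hy1; rewrite inE jT orbT.
Qed.

Lemma Ssum_nb0 (R : realType) (n m : nat) (g : 'I_m -> 'cV[R]_n -> R) T W :
  ~~ nb g T set0 -> Ssum g T W = 0.
Proof.
move=> H; rewrite /Ssum big1 // => J _.
case E: (nb g T J); last by rewrite mulr0.
by move: H; rewrite (nb_weak E).
Qed.

Lemma key (R : realType) (n m : nat) (g : 'I_m -> 'cV[R]_n -> R)
  (Hg : forall i p z (s : R), g i (p + s *: (z - p)) = g i p + s * (g i z - g i p)) :
  forall N (T : {set 'I_m}), (#|~: T| < N)%N ->
  forall w (W : {set 'I_m}) p, (#|W| < w)%N ->
  (forall j, j \in T -> g j p = 0) -> (forall i, 0 < g i p -> i \in W) ->
  (forall i, i \in W -> 0 <= g i p) -> (forall i, i \in W -> i \notin T) ->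
  Ssum g T W = ((W == set0) && nb g T set0)%:R.
Proof.
elim=> [//|N IHN] T HT; elim=> [//|w IHw] W p HW.
have zc : forall q k, (forall j, j \in T -> g j q = 0) ->
    (forall i, 0 < g i q -> i \in W) -> (forall i, i \in W -> 0 <= g i q) ->
    (forall i, i \in W -> i \notin T) -> k \in W -> g k q = 0 ->
    Ssum g T W = ((W == set0) && nb g T set0)%:R.
  move=> q k HqT Hqpos Hqnn Hdis kW gk0.
  have kT := Hdis k kW.
  rewrite (Ssum_decomp g T kW).
  have HW' : (#|W :\ k| < w)%N by move: HW; rewrite (cardsD1 k W) kW.
  have Hpos' : forall i, 0 < g i q -> i \in W :\ k.
    move=> i gi; rewrite !inE Hqpos // andbT; apply/eqP => ik.
    by move: gi; rewrite ik gk0 ltxx.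
  have Hnn' : forall i, i \in W :\ k -> 0 <= g i q.
    by move=> i; rewrite inE => /andP[_ /Hqnn].
  have Hdis' : forall i, i \in W :\ k -> i \notin T.
    by move=> i; rewrite inE => /andP[_ /Hdis].
  rewrite (IHw (W :\ k) q HW' HqT Hpos' Hnn' Hdis').
  have HT' : (#|~: (k |: T)| < N)%N.
    have h1 := cardsC (k |: T); have h2 := cardsC T.
    rewrite cardsU1 kT in h1; move: HT h1 h2; lia.
  have HqT' : forall j, j \in k |: T -> g j q = 0.
    by move=> j; rewrite in_setU1 => /orP[/eqP -> //|/HqT].
  have Hdis'' : forall i, i \in W :\ k -> i \notin k |: T.
    move=> i; rewrite in_setD1 in_setU1 => /andP[ik /Hdis iT]; by rewrite negb_or ik iT.
  rewrite (IHN (k |: T) HT' (#|W :\ k|.+1) (W :\ k) q (ltnSn _) HqT' Hpos' Hnn' Hdis'').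
  have -> : (W == set0) = false by apply/negbTE/set0Pn; exists k.
  case E: (W :\ k == set0); last by rewrite /= subrr.
  have feas : forall i, g i q <= 0.
    move=> i; rewrite leNgt; apply/negP => /Hpos'.
    by rewrite (eqP E) inE.
  have -> : nb g T set0.
    by apply/asboolP; exists q; split=> // j; rewrite set0U => /HqT.
  have -> : nb g (k |: T) set0.
    by apply/asboolP; exists q; split=> // j; rewrite set0U => /HqT'.
  by rewrite subrr.
move=> HpT Hpos Hnn Hdis.
case W0: (W == set0).
  by move/eqP: W0 => ->; rewrite Ssum_set0.
case: (boolP [exists k in W, g k p == 0]) => [/existsP [k /andP[kW /eqP gk]]|Hne].
  by rewrite (zc p k HpT Hpos Hnn Hdis kW gk) W0.
case nbT: (nb g T set0); last by rewrite Ssum_nb0 ?nbT.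
move: (nbT) => /asboolP [z0 [Hz0T Hz0]].
have Wpos : forall i, i \in W -> 0 < g i p.
  move=> i iW; rewrite lt_neqAle Hnn // andbT eq_sym.
  apply/negP => /eqP gi; move/negP: Hne; apply; apply/existsP; exists i.
  by rewrite iW gi eqxx.
have [k0 k0W] : exists k0, k0 \in W by apply/set0Pn; rewrite W0.
pose t i := g i p / (g i p - g i z0).
have dpos : forall i, i \in W -> 0 < g i p - g i z0.
  by move=> i iW; have := Wpos i iW; have := Hz0 i; lra.
case: (arg_minP t (P := mem W) k0W) => k kW kmin.
pose s := t k.
have s0 : 0 <= s by rewrite /s /t divr_ge0 // ltW ?dpos ?Wpos.
have s1 : s <= 1.
  rewrite /s /t ler_pdivrMr ?dpos // mul1r; have := Hz0 k; lra.
pose y := p + s *: (z0 - p).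
have Hy : forall i, g i y = g i p + s * (g i z0 - g i p) by move=> i; exact: Hg.
have HyW : forall i, i \in W -> 0 <= g i y.
  move=> i iW; rewrite Hy.
  have := kmin i iW; rewrite /= -/s /t ler_pdivlMr ?dpos // => H; lra.
have Hyk : g k y = 0.
  rewrite Hy /s /t; have := dpos k kW => dk.
  by field; rewrite gt_eqF.
have HyT : forall j, j \in T -> g j y = 0.
  move=> j jT; rewrite Hy HpT // Hz0T ?inE ?jT // ; lra.
have HynW : forall i, i \notin W -> g i y <= 0.
  move=> i iW; rewrite Hy.
  have gp : g i p <= 0 by rewrite leNgt; apply/negP => /Hpos; rewrite (negbTE iW).
  have := Hz0 i; nra.
rewrite (zc y k) ?W0 //.
move=> i gi; apply/negPn/negP => /HynW; rewrite leNgt gi //.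
Qed.

Theorem theorem1 (R : realType) (n m : nat) (A : 'M[R]_(n, m)) (b : 'cV[R]_m)
  (F0 : {set {set 'I_m}}) :
  (0 < n)%N -> (0 < m)%N ->
  (forall i : 'I_m, col i A != 0) ->
  (exists x : 'cV[R]_n, forall i : 'I_m, aTx A x i <= b i 0) ->
  (* F0 is F(0+): the common value of F(eps) for all small eps > 0 *)
  (exists eps0 : R, 0 < eps0 /\
     forall eps : R, 0 < eps -> eps < eps0 ->
       forall J : {set 'I_m}, J \in F0 <-> in_F_eps A b eps J) ->
  forall x : 'cV[R]_n,
    ind_union A b x =
    \sum_(J in F0) (-1) ^+ (#|J|.-1) * ind_inter A b J x.
Proof.
move=> _ _ _ [x0 Hx0] [eps0 [eps0_pos Heps]] x.
pose I0 := [set i | in_Hc A b i x].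
pose d i := aTx A x i - b i 0.
pose del := \big[Order.min/1]_(i | i \in I0) d i.
have del_pos : 0 < del.
  apply/bigmin_gtP; split => // i; rewrite inE /in_Hc /d subr_gt0 //.
have del_le : forall i, i \in I0 -> del <= d i by move=> i iI; exact: bigmin_le_cond.
pose eps := Order.min (eps0 / 2) (Order.min (del / 2) (1 / 2)).
have epos : 0 < eps by rewrite !lt_min; apply/andP; split; [|apply/andP; split]; lra.
have h1 : eps <= eps0 / 2 by rewrite ge_min lexx.
have h2 : eps <= del / 2 by rewrite ge_min ge_min lexx orbT.
have h3 : eps <= 1 / 2 by rewrite ge_min ge_min lexx !orbT.
have elt : eps < eps0 by lra.
have epow : forall i : 'I_m, 0 < eps ^+ i.+1 <= eps.
  move=> i; rewrite exprn_gt0 //= exprS; apply: ler_piMr; first lra.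
  apply: exprn_ile1; lra.
pose g i y := aTx A y i - b_eps b eps i.
have Hg : forall i p z (s : R), g i (p + s *: (z - p)) = g i p + s * (g i z - g i p).
  move=> i p z s; rewrite /g /aTx mulmxDr -scalemxAr mulmxBr !mxE; ring.
pose W := [set i | 0 < g i x].
have WI : forall i, (i \in W) = in_Hc A b i x.
  move=> i; rewrite inE /g /in_Hc /b_eps subr_gt0; have := epow i.
  case/andP => ep1 ep2.
  apply/idP/idP => H; first by lra.
  have := del_le i; rewrite inE /in_Hc /d => /(_ H); lra.
have nb0 : nb g set0 set0.
  apply/asboolP; exists x0; split; first by move=> j; rewrite setU0 inE.
  move=> i; rewrite /g /b_eps subr_le0; have := Hx0 i; have := epow i; case/andP => *; lra.
have K : Ssum g set0 W = (W == set0)%:R.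
  have := @key R n m g Hg _ set0 (ltnSn _) _ W x (ltnSn _); rewrite nb0 andbT; apply.
  - by move=> j; rewrite inE.
  - by move=> i Hi; rewrite inE ?Hi.
  - by move=> i; rewrite inE => /ltW.
  - by move=> i Hi; rewrite inE ?Hi.
have HF : forall J, (J \in F0) = (J != set0) && nb g set0 J.
  move=> J; have [H1 H2] := Heps eps epos elt J; apply/idP/idP.
    move/H1 => [Jn [y [Hy1 Hy2]]]; rewrite Jn; apply/asboolP; exists y; split.
      by move=> j; rewrite setU0 /g => /Hy1 ->; rewrite subrr.
    by move=> i; rewrite /g subr_le0; exact: Hy2.
  move/andP => [Jn /asboolP [y [Hy1 Hy2]]]; apply: H2; split => //; exists y; split.
    move=> i iJ; apply/eqP; rewrite -subr_eq0; apply/eqP; apply: Hy1.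
    by rewrite setU0.
  by move=> i; rewrite -subr_le0; exact: Hy2.
have Hint : forall J, ind_inter A b J x = (J \subset W)%:R.
  move=> J; rewrite /ind_inter; congr (nat_of_bool _)%:R; apply/idP/idP.
    by move/forall_inP => H; apply/subsetP => i /H; rewrite WI.
  by move/subsetP => H; apply/forall_inP => i /H; rewrite WI.
have Hun : ind_union A b x = (W != set0)%:R.
  rewrite /ind_union; congr (nat_of_bool _)%:R; apply/existsP/set0Pn => -[i Hi]; exists i;
    by rewrite ?WI // -WI.
rewrite Hun.
have -> : (W != set0)%:R = \sum_(J : {set 'I_m} | J \subset W)
    ((J == set0)%:R - (-1) ^+ #|J| * (nb g set0 J)%:R) :> R.
  rewrite sumrB; rewrite /Ssum in K; rewrite K.
  rewrite (bigD1 set0) ?sub0set //= eqxx big1 ?addr0.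
    by case: (W == set0); rewrite /= ?subrr ?subr0.
  by move=> J /andP[_ /negbTE ->].
rewrite [RHS]big_mkcond [LHS]big_mkcond /=; apply: eq_bigr => J _.
rewrite Hint HF.
case J0: (J == set0).
  by move/eqP: J0 => ->; rewrite sub0set nb0 cards0 expr0 /= mul1r subrr.
have cJ : (0 < #|J|)%N by rewrite card_gt0 J0.
case JW: (J \subset W); case: (nb g set0 J); rewrite /= ?mulr0 ?mulr1 ?subrr ?sub0r //.
rewrite -{1}(prednK cJ) exprS mulN1r opprK //.
Qed.
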